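(* In the setting of the context (with assumptions (A.1)–(A.3)), suppose the PMM generates infinite sequences $\{(u_k,v_k)\}$, $\{(z_k,w_k)\}$, $\{\gamma_k\}$, $\{\rho_k\}$; define $x_k=z_{k-1}+\lambda w_{k-1}+\lambda(Cv_k-d)$, $y_k=x_k-\lambda(w_{k-1}-Mu_k)$, and for $k\ge1$ the ergodic quantities $$\Gamma_k=\sum_{j=1}^k\rho_j\gamma_j,\quad \bar u_k=\frac1{\Gamma_k}\sum_{j=1}^k\rho_j\gamma_ju_j,\quad \bar v_k=\frac1{\Gamma_k}\sum_{j=1}^k\rho_j\gamma_jv_j,\quad \bar x_k=\frac1{\Gamma_k}\sum_{j=1}^k\rho_j\gamma_jx_j,\quad \bar y_k=\frac1{\Gamma_k}\sum_{j=1}^k\rho_j\gamma_jy_j,$$ $$\bar\epsilon_k^u=\frac1{\Gamma_k}\sum_{j=1}^k\rho_j\gamma_j\langle u_j-\bar u_k,-M^*y_j\rangle,\qquad \bar\epsilon_k^v=\frac1{\Gamma_k}\sum_{j=1}^k\rho_j\gamma_j\langle v_j-\bar v_k,-C^*x_j\rangle.$$ Then $\bar\epsilon_k^v\ge0$, $\bar\epsilon_k^u\ge0$, and $$0\in\partial_{\bar\epsilon_k^v}g(\bar v_k)+C^*\bar x_k,\qquad 0\in\partial_{\bar\epsilon_k^u}f(\bar u_k)+M^*\bar y_k.$$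
   Context: Let $f:\mathbb{R}^{m_1}\to(-\infty,\infty]$, $g:\mathbb{R}^{m_2}\to(-\infty,\infty]$ be proper closed convex, $M:\mathbb{R}^{m_1}\to\mathbb{R}^n$, $C:\mathbb{R}^{m_2}\to\mathbb{R}^n$ linear, $d\in\mathbb{R}^n$; consider $\min\{f(u)+g(v):Mu+Cv=d\}$ with Lagrangian $L(u,v,z)=f(u)+g(v)+\langle Mu+Cv-d,z\rangle$. A saddle point is $(u^*,v^*,z^* )$ with $L(u^*,v^*,z^* )$ finite and $\min_{(u,v)}L(u,v,z^* )=L(u^*,v^*,z^* )=\max_zL(u^*,v^*,z)$. $^*$ on functions denotes the Fenchel conjugate, on operators the adjoint. Standing assumptions: (A.1) $L$ has a saddle point; (A.2) $\mathrm{ri}(\mathrm{dom} f^* )\cap\mathrm{range}(M^* )\ne\emptyset$; (A.3) $\mathrm{ri}(\mathrm{dom} g^* )\cap\mathrm{range}(C^* )\ne\emptyset$. For $\epsilon\ge0$, the $\epsilon$-subdifferential is $\partial_\epsilon \theta(x)=\{s:\theta(x')\ge\theta(x)+\langle s,x'-x\rangle-\epsilon\ \forall x'\}$. PMM: given $(z_0,w_0)\in\mathbb{R}^n\times\mathbb{R}^n$, $\lambda>0$, $\bar\rho\in[0,1)$, for $k=1,2,\dots$: (1) let $v_k$ be a minimizer of $g(v)+\langle z_{k-1}+\lambda w_{k-1},Cv-d\rangle+\frac\lambda2\|Cv-d\|^2$ and $u_k$ a minimizer of $f(u)+\langle z_{k-1}+\lambda(Cv_k-d),Mu\rangle+\frac\lambda2\|Mu\|^2$;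 (2) if $\|Mu_k+Cv_k-d\|+\|Mu_k-w_{k-1}\|=0$ stop; otherwise set $\gamma_k=\dfrac{\lambda\|Cv_k-d+w_{k-1}\|^2+\lambda\langle d-Cv_k-Mu_k,w_{k-1}-Mu_k\rangle}{\|Mu_k+Cv_k-d\|^2+\lambda^2\|Mu_k-w_{k-1}\|^2}$; (3) choose $\rho_k\in[1-\bar\rho,1+\bar\rho]$ and set $z_k=z_{k-1}+\rho_k\gamma_k(Mu_k+Cv_k-d)$, $w_k=w_{k-1}-\rho_k\gamma_k\lambda(w_{k-1}-Mu_k)$. *)

(* Defs.v *)
(* R : realType, vectors in R^n are column vectors 'cV[R]_n,
   linear maps R^m -> R^n are matrices 'M[R]_(n,m), adjoint = transpose,
   extended-valued functions take values in \bar R (mathcomp-analysis). *)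
From HB Require Import structures.
From mathcomp Require Import all_boot all_order all_algebra.
From mathcomp Require Import all_classical all_reals all_analysis.
Set Implicit Arguments. Unset Strict Implicit. Unset Printing Implicit Defensive.
Import Order.TTheory GRing.Theory Num.Theory.
Import numFieldNormedType.Exports.
Local Open Scope classical_set_scope.
Local Open Scope ring_scope.

Section Defs.
Variable R : realType.

Definition dotp (n : nat) (x y : 'cV[R]_n) : R := \sum_(i < n) x i 0 * y i 0.

Definition enorm (n : nat) (x : 'cV[R]_n) : R := Num.sqrt (dotp x x).

Definition edom (n : nat) (f : 'cV[R]_n -> \bar R) : set 'cV[R]_n :=
  [set x | (f x < +oo)%E].

Definition proper_fun (n : nat) (f : 'cV[R]_n -> \bar R) : Prop :=
  (forall x, f x != -oo%E) /\ (exists x, (f x < +oo)%E).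

Definition convex_fun (n : nat) (f : 'cV[R]_n -> \bar R) : Prop :=
  forall x y (t : R), edom f x -> edom f y -> 0 <= t <= 1 ->
    (f (t *: x + (1 - t) *: y)%R <= t%:E * f x + (1 - t)%:E * f y)%E.

(* closed = lower semicontinuous: all sublevel sets are closed *)
Definition closed_fun (n : nat) (f : 'cV[R]_n -> \bar R) : Prop :=
  forall a : R, closed [set x | (f x <= a%:E)%E].

Definition conj_fun (n : nat) (f : 'cV[R]_n -> \bar R) (s : 'cV[R]_n) : \bar R :=
  ereal_sup [set ((dotp s x)%:E - f x)%E | x in [set: 'cV[R]_n]].

Definition aff_hull (n : nat) (S : set 'cV[R]_n) : set 'cV[R]_n :=
  [set y | exists (k : nat) (t : 'I_k -> R) (p : 'I_k -> 'cV[R]_n),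
      (forall i, S (p i)) /\ \sum_(i < k) t i = 1 /\
      y = \sum_(i < k) t i *: p i].

Definition rel_int (n : nat) (S : set 'cV[R]_n) : set 'cV[R]_n :=
  [set x | S x /\ exists e : R, 0 < e /\
      (forall y, aff_hull S y -> enorm (y - x) < e -> S y)].

Definition mx_range (m n : nat) (A : 'M[R]_(m, n)) : set 'cV[R]_m :=
  [set y | exists x : 'cV[R]_n, y = A *m x].

Definition lagr (m1 m2 n : nat) (f : 'cV[R]_m1 -> \bar R) (g : 'cV[R]_m2 -> \bar R)
  (M : 'M[R]_(n, m1)) (C : 'M[R]_(n, m2)) (d : 'cV[R]_n)
  (u : 'cV[R]_m1) (v : 'cV[R]_m2) (z : 'cV[R]_n) : \bar R :=
  (f u + g v + (dotp (M *m u + C *m v - d) z)%:E)%E.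

Definition saddle_point (m1 m2 n : nat) (f : 'cV[R]_m1 -> \bar R) (g : 'cV[R]_m2 -> \bar R)
  (M : 'M[R]_(n, m1)) (C : 'M[R]_(n, m2)) (d : 'cV[R]_n)
  (us : 'cV[R]_m1) (vs : 'cV[R]_m2) (zs : 'cV[R]_n) : Prop :=
  lagr f g M C d us vs zs \is a fin_num /\
  (forall u v, (lagr f g M C d us vs zs <= lagr f g M C d u v zs)%E) /\
  (forall z, (lagr f g M C d us vs z <= lagr f g M C d us vs zs)%E).

Definition eps_subdiff (n : nat) (th : 'cV[R]_n -> \bar R) (eps : R) (x : 'cV[R]_n)
  (s : 'cV[R]_n) : Prop :=
  forall x', (th x' >= th x + (dotp s (x' - x))%:E - eps%:E)%E.

(* The PMM iteration: sequences indexed by nat, (z 0, w 0) the initial point;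
   for every k >= 1 the steps (1)-(3) hold and the stopping test fails. *)
Definition pmm_seq (m1 m2 n : nat) (f : 'cV[R]_m1 -> \bar R) (g : 'cV[R]_m2 -> \bar R)
  (M : 'M[R]_(n, m1)) (C : 'M[R]_(n, m2)) (d : 'cV[R]_n) (lam rhobar : R)
  (u : nat -> 'cV[R]_m1) (v : nat -> 'cV[R]_m2) (z w : nat -> 'cV[R]_n)
  (gam rho : nat -> R) : Prop :=
  forall k : nat, (1 <= k)%N ->
    (forall v' : 'cV[R]_m2,
       (g (v k) + (dotp (z k.-1 + lam *: w k.-1) (C *m v k - d)
                    + lam / 2 * dotp (C *m v k - d) (C *m v k - d))%:E
        <= g v' + (dotp (z k.-1 + lam *: w k.-1) (C *m v' - d)
                    + lam / 2 * dotp (C *m v' - d) (C *m v' - d))%:E)%E) /\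
    (forall u' : 'cV[R]_m1,
       (f (u k) + (dotp (z k.-1 + lam *: (C *m v k - d)) (M *m u k)
                    + lam / 2 * dotp (M *m u k) (M *m u k))%:E
        <= f u' + (dotp (z k.-1 + lam *: (C *m v k - d)) (M *m u')
                    + lam / 2 * dotp (M *m u') (M *m u'))%:E)%E) /\
    enorm (M *m u k + C *m v k - d) + enorm (M *m u k - w k.-1) != 0 /\
    gam k = (lam * enorm (C *m v k - d + w k.-1) ^+ 2
             + lam * dotp (d - C *m v k - M *m u k) (w k.-1 - M *m u k))
            / (enorm (M *m u k + C *m v k - d) ^+ 2
               + lam ^+ 2 * enorm (M *m u k - w k.-1) ^+ 2) /\
    1 - rhobar <= rho k <= 1 + rhobar /\
    z k = z k.-1 + (rho k * gam k) *: (M *m u k + C *m v k - d) /\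
    w k = w k.-1 - (rho k * gam k * lam) *: (w k.-1 - M *m u k).

Definition pmm_x (m2 n : nat) (C : 'M[R]_(n, m2)) (d : 'cV[R]_n) (lam : R)
  (v : nat -> 'cV[R]_m2) (z w : nat -> 'cV[R]_n) (k : nat) : 'cV[R]_n :=
  z k.-1 + lam *: w k.-1 + lam *: (C *m v k - d).

Definition pmm_y (m1 m2 n : nat) (M : 'M[R]_(n, m1)) (C : 'M[R]_(n, m2)) (d : 'cV[R]_n)
  (lam : R) (u : nat -> 'cV[R]_m1) (v : nat -> 'cV[R]_m2) (z w : nat -> 'cV[R]_n)
  (k : nat) : 'cV[R]_n :=
  pmm_x C d lam v z w k - lam *: (w k.-1 - M *m u k).

Definition Gam (gam rho : nat -> R) (k : nat) : R :=
  \sum_(1 <= j < k.+1) rho j * gam j.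

Definition erg (m : nat) (gam rho : nat -> R) (a : nat -> 'cV[R]_m) (k : nat) : 'cV[R]_m :=
  (Gam gam rho k)^-1 *: \sum_(1 <= j < k.+1) (rho j * gam j) *: a j.

Definition erg_eps (m n : nat) (gam rho : nat -> R) (A : 'M[R]_(n, m))
  (a : nat -> 'cV[R]_m) (b : nat -> 'cV[R]_n) (k : nat) : R :=
  (Gam gam rho k)^-1 * \sum_(1 <= j < k.+1)
     rho j * gam j * dotp (a j - erg gam rho a k) (- (A^T *m b j)).

End Defs.

(* Main.v *)
Require Import Defs.
From HB Require Import structures.
From mathcomp Require Import all_boot all_order all_algebra.
From mathcomp Require Import all_classical all_reals all_analysis.
From mathcomp Require Import ring lra.
Import Order.TTheory GRing.Theory Num.Theory.
Import numFieldNormedType.Exports.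
Local Open Scope classical_set_scope.
Local Open Scope ring_scope.

Section Aux.
Variable R : realType.

Lemma dotpC n (x y : 'cV[R]_n) : dotp x y = dotp y x.
Proof. by apply: eq_bigr => i _; rewrite mulrC. Qed.
Lemma dotpDl n (x y z : 'cV[R]_n) : dotp (x + y) z = dotp x z + dotp y z.
Proof. by rewrite /dotp -big_split; apply: eq_bigr => i _; rewrite mxE mulrDl. Qed.
Lemma dotpDr n (x y z : 'cV[R]_n) : dotp z (x + y) = dotp z x + dotp z y.
Proof. by rewrite dotpC dotpDl !(@dotpC _ z). Qed.
Lemma dotpZl n a (x y : 'cV[R]_n) : dotp (a *: x) y = a * dotp x y.
Proof. by rewrite /dotp mulr_sumr; apply: eq_bigr => i _; rewrite mxE mulrA. Qed.
Lemma dotpZr n a (x y : 'cV[R]_n) : dotp y (a *: x) = a * dotp y x.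
Proof. by rewrite dotpC dotpZl dotpC. Qed.
Lemma dotpNl n (x y : 'cV[R]_n) : dotp (- x) y = - dotp x y.
Proof. by rewrite /dotp -sumrN; apply: eq_bigr => i _; rewrite mxE mulNr. Qed.
Lemma dotpNr n (x y : 'cV[R]_n) : dotp y (- x) = - dotp y x.
Proof. by rewrite dotpC dotpNl dotpC. Qed.
Lemma dotpBr n (x y z : 'cV[R]_n) : dotp z (x - y) = dotp z x - dotp z y.
Proof. by rewrite dotpDr dotpNr. Qed.
Lemma dotp0l n (y : 'cV[R]_n) : dotp 0 y = 0.
Proof. by rewrite /dotp big1 // => i _; rewrite mxE mul0r. Qed.
Lemma dotp0r n (y : 'cV[R]_n) : dotp y 0 = 0.
Proof. by rewrite dotpC dotp0l. Qed.
Lemma dotp_mx n (x y : 'cV[R]_n) : dotp x y = (x^T *m y) 0 0.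
Proof. by rewrite /dotp mxE; apply: eq_bigr => i _; rewrite mxE. Qed.
Lemma dotp_trmx m n (A : 'M[R]_(n, m)) x y : dotp (A^T *m x) y = dotp x (A *m y).
Proof. by rewrite !dotp_mx trmx_mul trmxK mulmxA. Qed.
Lemma dotp_suml n (I : Type) (r : seq I) (P : pred I) (F : I -> 'cV[R]_n) y :
  dotp (\sum_(i <- r | P i) F i) y = \sum_(i <- r | P i) dotp (F i) y.
Proof.
apply: (big_rec2 (fun s1 s2 => dotp s1 y = s2)) => [|i s1 s2 _ <-].
  exact: dotp0l.
exact: dotpDl.
Qed.

Lemma fin_of m (h : 'cV[R]_m -> \bar R) x c :
  h x != -oo%E -> (h x <= c%:E)%E -> h x = (fine (h x))%:E.
Proof.
move: (h x) => [r| |] //= _; by rewrite leye_eq.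
Qed.


Lemma min_subgrad m n (h : 'cV[R]_m -> \bar R) (A : 'M[R]_(n, m)) (a b : 'cV[R]_n)
  (lam : R) (x0 : 'cV[R]_m) :
  0 <= lam -> convex_fun h -> proper_fun h ->
  (forall x', (h x0 + (dotp a (A *m x0 - b) + lam / 2 * dotp (A *m x0 - b) (A *m x0 - b))%:E
     <= h x' + (dotp a (A *m x' - b) + lam / 2 * dotp (A *m x' - b) (A *m x' - b))%:E)%E) ->
  h x0 = (fine (h x0))%:E /\
  forall x' r', h x' = r'%:E ->
    fine (h x0) + dotp (- (A^T *m (a + lam *: (A *m x0 - b)))) (x' - x0) <= r'.
Proof.
move=> hlam hconv [hninf [xf hxf]] hmin.
have hx0 : h x0 = (fine (h x0))%:E.
  move: (hmin xf) (hninf x0); case: (h x0) => [r| |] //= H _.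
  move: hxf H; case: (h xf) => [r'| |] //= _.
split=> // x' r' hx'.
set r0 := fine (h x0).
set p := A *m x0 - b.
set e := A *m (x' - x0).
have -> : dotp (- (A^T *m (a + lam *: p))) (x' - x0) = - (dotp a e + lam * dotp p e).
  by rewrite dotpNl dotp_trmx dotpDl dotpZl.
rewrite leNgt; apply/negP => Hlt.
set D := r0 - (dotp a e + lam * dotp p e) - r'.
have hD : 0 < D by rewrite /D; lra.
set c := lam / 2 * dotp e e.
have hee : 0 <= dotp e e by rewrite /dotp; apply: sumr_ge0 => i _; rewrite -expr2 sqr_ge0.
have hc : 0 <= c by rewrite /c mulr_ge0 // divr_ge0.
have hden : 0 < 2 * c + 1 + D by lra.
set t := D / (2 * c + 1 + D).
have ht : t * (2 * c + 1 + D) = D by rewrite /t mulfVK // gt_eqF.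
have ht0 : 0 < t by rewrite /t divr_gt0.
have ht1 : t <= 1 by rewrite /t ler_pdivrMr // mul1r; lra.
set xt := x0 + t *: (x' - x0).
have hxt : t *: x' + (1 - t) *: x0 = xt.
  by rewrite /xt scalerBl scale1r scalerBr addrCA.
have hcv := hconv x' x0 t.
rewrite hxt hx' hx0 -!EFinM -EFinD in hcv.
have {}hcv := hcv (ltac:(by rewrite /edom /= hx' ltry)) (ltac:(by rewrite /edom /= hx0 ltry)) (ltac:(apply/andP; split; lra)).
have hxtf := @fin_of _ _ _ _ (hninf xt) hcv.
set rt := fine (h xt) in hxtf.
rewrite hxtf lee_fin in hcv.
have hm := hmin xt.
rewrite hxtf hx0 -!EFinD lee_fin in hm.
have hp : A *m xt - b = p + t *: e.
  by rewrite /xt mulmxDr -scalemxAr addrAC.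
rewrite hp -/p -/r0 in hm; clearbody p e.
have E1 : dotp e a = dotp a e by rewrite dotpC.
have E2 : dotp e p = dotp p e by rewrite dotpC.
rewrite !dotpDr !dotpDl !dotpZr !dotpZl ?E1 ?E2 in hm.
have key : t * D <= t * (t * c).
  rewrite /D /c -/r0 in hcv *; lra.
have : D <= t * c.
  rewrite -(ler_pM2l ht0); lra.
have : t * c < D.
  have : 0 < t * (c + 1 + D) by rewrite mulr_gt0 //; lra.
  lra.
lra.
Qed.


Lemma Gpos (gam rho : nat -> R) k :
  (forall j, (1 <= j)%N -> 0 < rho j * gam j) -> (1 <= k)%N -> 0 < Gam gam rho k.
Proof.
move=> hpos; case: k => // N _; rewrite /Gam big_ltn //.
have : 0 <= \sum_(2 <= i < N.+2) rho i * gam i.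
  rewrite big_nat_cond; apply: sumr_ge0 => i /andP[/andP[hi _] _].
  by apply: ltW; apply: hpos; apply: leq_trans hi.
have := hpos 1%N isT; lra.
Qed.

Lemma jensen m (h : 'cV[R]_m -> \bar R) (gam rho : nat -> R) (a : nat -> 'cV[R]_m)
  (r : nat -> R) k :
  convex_fun h -> (forall x, h x != -oo%E) -> (forall j, (1 <= j)%N -> 0 < rho j * gam j) ->
  (forall j, (1 <= j)%N -> h (a j) = (r j)%:E) -> (1 <= k)%N ->
  (h (erg gam rho a k) <= ((Gam gam rho k)^-1 * \sum_(1 <= j < k.+1) rho j * gam j * r j)%:E)%E.
Proof.
move=> hconv hninf hpos hfin; case: k => // N _.
elim: N => [|N IH].
  rewrite /erg /Gam !big_nat1 scalerA mulVf ?scale1r; last first.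
    by rewrite gt_eqF // hpos.
  by rewrite mulrA mulVf ?mul1r ?hfin // gt_eqF // hpos.
have hG := @Gpos gam rho N.+1 hpos isT.
move: IH hG; rewrite /erg /Gam.
rewrite !(@big_nat_recr _ _ _ N.+2) //=.
set G := \sum_(1 <= i < N.+2) rho i * gam i.
set P := \sum_(1 <= i < N.+2) (rho i * gam i) *: a i.
set H := \sum_(1 <= i < N.+2) rho i * gam i * r i.
set al := rho N.+2 * gam N.+2.
move=> IH hG.
have hal : 0 < al by rewrite /al hpos.
set xb := G^-1 *: P.
have hxb := @fin_of _ _ _ _ (hninf xb) IH.
set rx := fine (h xb) in hxb.
rewrite hxb lee_fin in IH.
set t := G / (G + al).
have hGa : 0 < G + al by lra.
have heq : (G + al)^-1 *: (P + al *: a N.+2) = t *: xb + (1 - t) *: a N.+2.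
  rewrite /xb /t; apply/matrixP => i j; rewrite !mxE; field.
  by rewrite !gt_eqF.
rewrite heq.
have ht0 : 0 <= t by rewrite /t divr_ge0 // ltW.
have ht1 : t <= 1 by rewrite /t ler_pdivrMr // mul1r; lra.
have := hconv xb (a N.+2) t.
rewrite hxb hfin // -!EFinM -EFinD => hc.
have {}hc := hc (ltac:(by rewrite /edom /= hxb ltry)) (ltac:(by rewrite /edom /= hfin // ltry)) (ltac:(apply/andP; split; lra)).
apply: le_trans hc _; rewrite lee_fin.
set q := (G + al)^-1.
have hq : (G + al) * q = 1 by rewrite /q mulfV // gt_eqF.
have hq0 : 0 < q by rewrite /q invr_gt0.
have htq : t = G * q by rewrite /t.
have hGrx : G * rx <= H.
  by rewrite ler_pdivlMl in IH.
have h1 : q * (G * rx) <= q * H by rewrite ler_pM2l.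
have hq' : G * q * r N.+2 + al * q * r N.+2 = r N.+2.
  by rewrite -mulrDl -mulrDl hq mul1r.
rewrite htq; lra.
Qed.


Lemma erg_subdiff m n (h : 'cV[R]_m -> \bar R) (A : 'M[R]_(n, m)) (a : nat -> 'cV[R]_m)
  (b : nat -> 'cV[R]_n) (gam rho : nat -> R) k :
  convex_fun h -> (forall x, h x != -oo%E) -> (1 <= k)%N ->
  (forall j, (1 <= j)%N -> 0 < rho j * gam j) ->
  (forall j, (1 <= j)%N -> h (a j) = (fine (h (a j)))%:E) ->
  (forall j, (1 <= j)%N -> forall x' r', h x' = r'%:E ->
      fine (h (a j)) + dotp (- (A^T *m b j)) (x' - a j) <= r') ->
  0 <= erg_eps gam rho A a b k /\
  exists s, eps_subdiff h (erg_eps gam rho A a b k) (erg gam rho a k) s /\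
            0 = s + A^T *m erg gam rho b k.
Proof.
move=> hconv hninf hk hpos hfin hsub.
have hJ := @jensen _ h gam rho a (fun j => fine (h (a j))) k hconv hninf hpos hfin hk.
have hG := @Gpos gam rho k hpos hk.
set ab := erg gam rho a k in hJ *.
have hab := @fin_of _ _ _ _ (hninf ab) hJ.
set ra := fine (h ab) in hab.
rewrite hab lee_fin in hJ.
set eps := erg_eps gam rho A a b k.
set Ga := Gam gam rho k in hJ hG.
have hsd : eps_subdiff h eps ab (- (A^T *m erg gam rho b k)).
  move=> x'.
  case hx': (h x') => [r'| |]; last first.
  - by have := hninf x'; rewrite hx'.
  - by rewrite leey.
  rewrite hab -!EFinD lee_fin.
  have E1 : dotp (- (A^T *m erg gam rho b k)) (x' - ab) =
     - (Ga^-1 * \sum_(1 <= j < k.+1) rho j * gam j *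
          (dotp (b j) (A *m x') - dotp (b j) (A *m ab))).
    rewrite dotpNl dotp_trmx /erg dotpZl dotp_suml; congr (- (_ * _)).
    by apply: eq_bigr => j _; rewrite dotpZl mulmxBr dotpBr.
  have E2 : eps = Ga^-1 * \sum_(1 <= j < k.+1) rho j * gam j *
          (- (dotp (b j) (A *m a j) - dotp (b j) (A *m ab))).
    rewrite /eps /erg_eps -/ab -/Ga; congr (_ * _).
    by apply: eq_bigr => j _; rewrite dotpC dotpNl dotp_trmx mulmxBr dotpBr.
  set T := \sum_(1 <= j < k.+1) rho j * gam j *
          (fine (h (a j)) - (dotp (b j) (A *m x') - dotp (b j) (A *m a j))).
  have hT : T <= Ga * r'.
    rewrite /Ga /Gam mulr_suml /T big_nat_cond [X in _ <= X]big_nat_cond.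
    apply: ler_sum => j /andP[/andP[hj _] _]; apply: ler_wpM2l; first exact/ltW/hpos.
    have := hsub j hj x' r' hx'.
    by rewrite dotpNl dotp_trmx mulmxBr dotpBr.
  have hT' : Ga^-1 * T <= r' by rewrite ler_pdivrMl.
  set S1 := \sum_(1 <= j < k.+1) rho j * gam j * fine (h (a j)) in hJ.
  have hkey : \sum_(1 <= j < k.+1) rho j * gam j *
          (dotp (b j) (A *m x') - dotp (b j) (A *m ab)) +
      \sum_(1 <= j < k.+1) rho j * gam j *
          (- (dotp (b j) (A *m a j) - dotp (b j) (A *m ab))) = S1 - T.
    by rewrite -big_split -sumrB; apply: eq_bigr => j _ /=; ring.
  have hkey' : Ga^-1 * \sum_(1 <= j < k.+1) rho j * gam j *
          (dotp (b j) (A *m x') - dotp (b j) (A *m ab)) +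
      Ga^-1 * \sum_(1 <= j < k.+1) rho j * gam j *
          (- (dotp (b j) (A *m a j) - dotp (b j) (A *m ab))) = Ga^-1 * S1 - Ga^-1 * T.
    by rewrite -mulrDr hkey mulrBr.
  rewrite E1 E2; lra.
split.
  have := hsd ab; rewrite subrr dotp0r hab -!EFinD lee_fin; lra.
exists (- (A^T *m erg gam rho b k)); split => //.
by rewrite addNr.
Qed.

Lemma gam_pos n (mu cv d w : 'cV[R]_n) lam : 0 < lam ->
  enorm (mu + cv - d) + enorm (mu - w) != 0 ->
  0 < (lam * enorm (cv - d + w) ^+ 2 + lam * dotp (d - cv - mu) (w - mu)) /
      (enorm (mu + cv - d) ^+ 2 + lam ^+ 2 * enorm (mu - w) ^+ 2).
Proof.
move=> hlam hns.
have dge0 : forall x : 'cV[R]_n, 0 <= dotp x x.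
  by move=> x; rewrite /dotp; apply: sumr_ge0 => i _; rewrite -expr2 sqr_ge0.
have en2 : forall x : 'cV[R]_n, enorm x ^+ 2 = dotp x x.
  by move=> x; rewrite /enorm sqr_sqrtr.
set P := mu + cv - d.
set Q := w - mu.
have e1 : cv - d + w = P + Q.
  by rewrite /P /Q; apply/matrixP => i j; rewrite !mxE; ring.
have e2 : d - cv - mu = - P.
  by rewrite /P; apply/matrixP => i j; rewrite !mxE; ring.
have e3 : mu - w = - Q.
  by rewrite /Q; apply/matrixP => i j; rewrite !mxE; ring.
rewrite e1 e2 e3 in hns *.
rewrite -/P in hns; clearbody P Q.
rewrite !en2.
have hnQ : enorm (- Q) = enorm Q by rewrite /enorm dotpNl dotpNr opprK.
rewrite hnQ in hns.
have EQP : dotp Q P = dotp P Q by rewrite dotpC.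
rewrite !dotpNl !dotpNr opprK !dotpDl !dotpDr EQP.
have hPP := dge0 P; have hQQ := dge0 Q; have hPQ := dge0 (P + Q).
rewrite !dotpDl !dotpDr EQP in hPQ.
have hpos : 0 < dotp P P + dotp Q Q.
  rewrite lt_def; apply/andP; split; last lra.
  apply/eqP => h0.
  have h1 : dotp P P = 0 by lra.
  have h2 : dotp Q Q = 0 by lra.
  by move: hns; rewrite /enorm h1 h2 sqrtr0 addr0 eqxx.
apply: divr_gt0.
  have : 0 < lam * (dotp P P + dotp Q Q) by rewrite mulr_gt0.
  have : 0 <= lam * (dotp P P + dotp Q Q + 2 * dotp P Q) by rewrite mulr_ge0 //; lra.
  nra.
have : 0 < lam ^+ 2 by rewrite exprn_gt0.
have : 0 <= lam ^+ 2 * dotp Q Q by rewrite mulr_ge0 // ltW // exprn_gt0.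
case: (boolP (dotp P P == 0)) => [/eqP hP0|hP0].
  have hQ : 0 < dotp Q Q by lra.
  have : 0 < lam ^+ 2 * dotp Q Q by rewrite mulr_gt0 // exprn_gt0.
  lra.
have : 0 < dotp P P by rewrite lt_def hP0 hPP.
lra.
Qed.

End Aux.
Arguments min_subgrad {R m n h A a b lam x0}.
Arguments erg_subdiff {R m n h A a b gam rho k}.


Theorem mainTheorem6 (R : realType) (m1 m2 n : nat)
  (f : 'cV[R]_m1 -> \bar R) (g : 'cV[R]_m2 -> \bar R)
  (M : 'M[R]_(n, m1)) (C : 'M[R]_(n, m2)) (d : 'cV[R]_n)
  (hf : proper_fun f /\ closed_fun f /\ convex_fun f)
  (hg : proper_fun g /\ closed_fun g /\ convex_fun g)
  (A1 : exists us vs zs, saddle_point f g M C d us vs zs)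
  (A2 : exists s, rel_int (edom (conj_fun f)) s /\ mx_range M^T s)
  (A3 : exists s, rel_int (edom (conj_fun g)) s /\ mx_range C^T s)
  (lam rhobar : R) (hlam : 0 < lam) (hrho : 0 <= rhobar < 1)
  (u : nat -> 'cV[R]_m1) (v : nat -> 'cV[R]_m2) (z w : nat -> 'cV[R]_n)
  (gam rho : nat -> R)
  (hpmm : pmm_seq f g M C d lam rhobar u v z w gam rho) :
  let x := pmm_x C d lam v z w in
  let y := pmm_y M C d lam u v z w in
  forall k : nat, (1 <= k)%N ->
    let ubar := erg gam rho u k in
    let vbar := erg gam rho v k in
    let xbar := erg gam rho x k in
    let ybar := erg gam rho y k in
    let epsu := erg_eps gam rho M u y k in
    let epsv := erg_eps gam rho C v x k in
    0 <= epsv /\ 0 <= epsu /\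
    (exists s, eps_subdiff g epsv vbar s /\ 0 = s + C^T *m xbar) /\
    (exists s, eps_subdiff f epsu ubar s /\ 0 = s + M^T *m ybar).
Proof.
move=> x y k hk ubar vbar xbar ybar epsu epsv.
case: hf => hfp [_ hfc]; case: hg => hgp [_ hgc].
have hpos : forall j, (1 <= j)%N -> 0 < rho j * gam j.
  move=> j hj; have [_ [_ [hns [hgam [hrh _]]]]] := hpmm j hj.
  apply: mulr_gt0.
    case/andP: hrh => h1 _; case/andP: hrho => _ h2; lra.
  rewrite hgam; exact: gam_pos.
have HG : forall j, (1 <= j)%N -> g (v j) = (fine (g (v j)))%:E /\
    forall x' r', g x' = r'%:E -> fine (g (v j)) + dotp (- (C^T *m x j)) (x' - v j) <= r'.
  move=> j hj; have [hv _] := hpmm j hj.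
  exact (min_subgrad (ltW hlam) hgc hgp hv).
have HF : forall j, (1 <= j)%N -> f (u j) = (fine (f (u j)))%:E /\
    forall x' r', f x' = r'%:E -> fine (f (u j)) + dotp (- (M^T *m y j)) (x' - u j) <= r'.
  move=> j hj; have [_ [hu _]] := hpmm j hj.
  have hu' : forall u', (f (u j) + (dotp (z j.-1 + lam *: (C *m v j - d)) (M *m u j - 0)
        + lam / 2 * dotp (M *m u j - 0) (M *m u j - 0))%:E
      <= f u' + (dotp (z j.-1 + lam *: (C *m v j - d)) (M *m u' - 0)
        + lam / 2 * dotp (M *m u' - 0) (M *m u' - 0))%:E)%E.
    by move=> u'; rewrite !subr0; exact: hu.
  have hy : y j = z j.-1 + lam *: (C *m v j - d) + lam *: (M *m u j - 0).
    by rewrite /y /pmm_y /pmm_x; apply/matrixP => i l; rewrite !mxE; ring.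
  rewrite hy; exact (min_subgrad (ltW hlam) hfc hfp hu').
have [e1 s1] := erg_subdiff hgc hgp.1 hk hpos (fun j hj => (HG j hj).1) (fun j hj => (HG j hj).2).
have [e2 s2] := erg_subdiff hfc hfp.1 hk hpos (fun j hj => (HF j hj).1) (fun j hj => (HF j hj).2).
by split; [|split; [|split]].
Qed.
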